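(* Let $\boldsymbol{\alpha}=(\alpha_1,\dots,\alpha_d)\in\mathbb{R}^d$ be such that $1,\alpha_1,\ldots,\alpha_d$ form a $\mathbb{Q}$-basis for an algebraic number field $K\subseteq\mathbb{R}$, let $\Lambda=\mathbb{Z}+\alpha_1\mathbb{Z}+\cdots+\alpha_d\mathbb{Z}$, and let $s\in\Lambda^*$. For $u\in\mathcal{Z}_\Lambda^\times$ define $q_u=\mathrm{Tr}(su)\in\mathbb{Z}$ and $\boldsymbol{p}_u\in\mathbb{Z}^d$ by $p_{u,i}=\mathrm{Tr}(su\alpha_i)$ for $1\le i\le d$. Then there is an invertible real $d\times d$ matrix $M(\boldsymbol{\alpha})$, depending only on $\boldsymbol{\alpha}$, such that for each $u\in\mathcal{Z}_\Lambda^\times$ there exist $\gamma_u\in\mathbb{R}$ and $\boldsymbol{\beta}_u\in\mathbb{R}^d$ with \[|q_u|^{1/d}(q_u\boldsymbol{\alpha}-\boldsymbol{p}_u)=\gamma_u\boldsymbol{\beta}_uM(\boldsymbol{\alpha}),\] where $\boldsymbol{\beta}_u$ (a row vector) lies on the surface in $\mathbb{R}^d$ with equation \[|x_1\cdots x_r|\prod_{i=1}^m\left(x_{r+2i-1}^2+x_{r+2i}^2\right)=1,\] and where $\gamma_u\to|\mathrm{N}(s)|^{1/d}$ as $u$ tends to infinity along any sequence of dominant units.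
   Context: $[K:\mathbb{Q}]=d+1$; $K$ has $r+1$ real embeddings $\sigma_0=\mathrm{id},\sigma_1,\dots,\sigma_r$ and $2m$ non-real embeddings $\sigma_{r+1},\dots,\sigma_d$ with $\sigma_{r+i}=\overline{\sigma_{r+m+i}}$ ($1\le i\le m$), so $d=r+2m$. $\mathrm{N},\mathrm{Tr}$ are norm and trace $K\to\mathbb{Q}$. $\Lambda^*=\{x\in K:\mathrm{Tr}(xy)\in\mathbb{Z}\ \forall y\in\Lambda\}$ is the dual lattice with respect to the trace form. $\mathcal{O}_K$ is the ring of integers, $\mathcal{Z}_\Lambda=\{\gamma\in\mathcal{O}_K:\gamma\Lambda\subseteq\Lambda\}$ with unit group $\mathcal{Z}_\Lambda^\times$. The logarithmic embedding $\varphi(x)=(\log|\sigma_0(x)|,\dots,\log|\sigma_{r+m}(x)|)$ maps $\mathcal{Z}_\Lambda^\times$ onto a lattice in the hyperplane $x_0+\cdots+x_r+2x_{r+1}+\cdots+2x_{r+m}=0$ of $\mathbb{R}^{r+m+1}$; $\kappa_\Lambda>1$ is the infimum of all $\kappa>1$ such that every closed cube of side $\log\kappa$ centered on this hyperplane contains a point of $\varphi(\mathcal{Z}_\Lambda^\times)$. A dominant unit is $u\in\mathcal{Z}_\Lambda^\times$ such that for some $t>1$, $t\le|u|\le\kappa_\Lambda t$ and $t^{-1/d}\le|\sigma_i(u)|\le\kappa_\Lambda t^{-1/d}$ for $1\le i\le d$; ''$u$ tends to infinity'' means $|u|\to\infty$. *)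

(* Defs.v *)
From HB Require Import structures.
From mathcomp Require Import all_boot all_order all_algebra.
From mathcomp Require Import falgebra fieldext.
From mathcomp Require Import complex.
From mathcomp Require Import boolp classical_sets reals exp topology normedtype sequences.

Set Implicit Arguments.
Unset Strict Implicit.
Unset Printing Implicit Defensive.

Import Order.TTheory GRing.Theory Num.Theory.
Local Open Scope ring_scope.

Section NumberFieldDefs.
Variable L : fieldExtType rat.

Definition ftrace (x : L) : rat :=
  \tr (passmx.mxof (vbasis fullv) (vbasis fullv) (amull x)).
Definition fnorm (x : L) : rat :=
  \det (passmx.mxof (vbasis fullv) (vbasis fullv) (amull x)).

Definition is_alg_int (x : L) : Prop :=
  exists p : {poly int}, p \is monic /\ root (map_poly (fun z : int => z%:~R) p) x.

Variables (d : nat) (alpha : 'I_d -> L).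

Definition in_lattice (x : L) : Prop :=
  exists (c0 : int) (c : 'I_d -> int), x = c0%:~R + \sum_(i < d) (c i)%:~R * alpha i.

Definition in_dual (s : L) : Prop :=
  forall y, in_lattice y -> ftrace (s * y) \is a Num.int.

Definition in_ZL (g : L) : Prop :=
  is_alg_int g /\ forall y, in_lattice y -> in_lattice (g * y).

Definition unit_ZL (u : L) : Prop :=
  in_ZL u /\ exists v, in_ZL v /\ u * v = 1.

Variable R : realType.

Definition cabs (z : R[i]) : R := Num.sqrt (complex.Re z ^+ 2 + complex.Im z ^+ 2).

Variables (sigma : 'I_d.+1 -> {rmorphism L -> R[i]}) (r m : nat).

Definition logemb (x : L) : 'I_(r + m).+1 -> R :=
  fun j => ln (cabs (sigma (inord j) x)).

Definition in_hyperplane (c : 'I_(r + m).+1 -> R) : Prop :=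
  \sum_(j < (r + m).+1) (if (j <= r)%N then 1 else 2) * c j = 0.

Definition kappa : R :=
  inf [set k : R | 1 < k /\
        forall c, in_hyperplane c ->
          exists u, unit_ZL u /\
            forall j, `|logemb u j - c j| <= ln k / 2].

(* |u| = |sigma_0 u| (K is viewed inside R via sigma_0 = id) *)
Definition rabs (x : L) : R := cabs (sigma ord0 x).

Definition dominant (u : L) : Prop :=
  unit_ZL u /\
  exists t : R, 1 < t /\ t <= rabs u <= kappa * t /\
    forall i : 'I_d.+1, (0 < i)%N ->
      powR t (- (d%:R)^-1) <= cabs (sigma i u) <= kappa * powR t (- (d%:R)^-1).

End NumberFieldDefs.

Definition rcoord (R : pzRingType) (n : nat) (x : 'rV[R]_n) (k : nat) : R :=
  if insub k is Some i then x ord0 i else 0.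

(* the surface |x_1 ... x_r| prod_(i=1..m) (x_(r+2i-1)^2 + x_(r+2i)^2) = 1
   (written with 0-based coordinates) *)
Definition on_surface (R : realType) (n r m : nat) (x : 'rV[R]_n) : Prop :=
  `| \prod_(j < r) rcoord x j | *
    \prod_(i < m) (rcoord x (r + 2 * i) ^+ 2 + rcoord x (r + 2 * i + 1) ^+ 2) = 1.

(* Main.v *)
Require Import Defs.
Set Warnings "-notation-overridden,-ambiguous-paths,-notation-incompatible-prefix".
From HB Require Import structures.
From mathcomp Require Import all_boot all_order all_algebra.
From mathcomp Require Import falgebra fieldext.
From mathcomp Require Import complex.
From mathcomp Require Import boolp classical_sets reals exp topology normedtype sequences.
From mathcomp Require Import ring lra zify.

Import Order.TTheory GRing.Theory Num.Theory.
Import numFieldNormedType.Exports.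
Local Open Scope classical_set_scope.
Local Open Scope ring_scope.
Section Artin.
Variables (R : realType) (L : fieldExtType rat) (n : nat).
Variable f : 'I_n -> {rmorphism L -> R[i]}.
Hypothesis hdist : forall i j, (forall x, f i x = f j x) -> i = j.

Lemma fZ (i : 'I_n) (a : rat) (x : L) : f i (a *: x) = ratr a * f i x.
Proof.
by rewrite -mulr_algl rmorphM; congr (_ * _); exact: (fmorph_eq_rat (f i \o in_alg L) a).
Qed.

Lemma artin_set k (S : {set 'I_n}) (z : 'I_n -> R[i]) : #|S| = k ->
  (forall j, j \notin S -> z j = 0) -> (forall x, \sum_j z j * f j x = 0) ->
  forall j, z j = 0.
Proof.
elim: k S z => [|k IH] S z hS hz hsum j.
  apply: hz; apply/negP => jS.
  by move/eqP: hS; rewrite cards_eq0 => /eqP S0; rewrite S0 inE in jS.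
have [jS|jS] := boolP (j \in S); last exact: hz.
have [[b [bS bj]]|hno] := pselect (exists b, b \in S /\ b != j); last first.
  have hall : forall i, i != j -> z i = 0.
    move=> i ij; apply: hz; apply/negP => iS; apply: hno; exists i; split => //.
  have := hsum 1; rewrite (bigD1 j) //= big1 ?addr0 ?rmorph1 ?mulr1 //.
  by move=> i ij; rewrite hall ?mul0r.
have [y hy] : exists y, f j y != f b y.
  apply (@contrapT _); move=> hno; move/eqP: bj; apply; apply: hdist => x.
  apply (@contrapT _); move=> hx; apply: hno; exists x; apply/eqP => e.
  by apply: hx; rewrite e.
have := IH (S :\ b) (fun i => z i * (f i y - f b y)).
have cS : #|S :\ b| = k by move: hS; rewrite (cardsD1 b S) bS add1n => -[].
move=> /(_ cS) H.
have H1 : forall i, i \notin S :\ b -> z i * (f i y - f b y) = 0.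
  move=> i; rewrite !inE negb_and negbK => /orP [/eqP ->|iS]; first by rewrite subrr mulr0.
  by rewrite hz ?mul0r.
have H2 : forall x, \sum_j0 z j0 * (f j0 y - f b y) * f j0 x = 0.
  move=> x.
  have e1 := hsum (y * x); have e2 := hsum x.
  transitivity (\sum_j0 z j0 * f j0 (y * x) - f b y * \sum_j0 z j0 * f j0 x).
    rewrite mulr_sumr -sumrB; apply: eq_bigr => i _; rewrite rmorphM; ring.
  by rewrite e1 e2 mulr0 subr0.
move/eqP: (H H1 H2 j); rewrite mulf_eq0 subr_eq0 (negPf hy) orbF => /eqP //.
Qed.

Lemma artin (z : 'I_n -> R[i]) : (forall x, \sum_j z j * f j x = 0) -> forall j, z j = 0.
Proof. by move=> h; apply: (@artin_set _ [set: 'I_n]%SET) => // j; rewrite inE. Qed.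

Lemma artin_basis (e : seq L) (z : 'I_n -> R[i]) : basis_of fullv e ->
  (forall k, (k < size e)%N -> \sum_j z j * f j e`_k = 0) -> forall j, z j = 0.
Proof.
move=> eb hk; apply: artin => x.
have eb' : basis_of fullv (in_tuple e) by [].
rewrite (coord_basis eb' (memvf x)).
under eq_bigr => j _ do rewrite rmorph_sum mulr_sumr.
rewrite exchange_big /= big1 // => k _.
under eq_bigr => j _ do rewrite fZ mulrCA.
by rewrite -mulr_sumr hk ?mulr0.
Qed.

End Artin.
Section TrDet.
Variables (R : realType) (L : fieldExtType rat) (d : nat).
Variable sigma : 'I_d.+1 -> {rmorphism L -> R[i]}.
Hypothesis hdist : forall i j, (forall x, sigma i x = sigma j x) -> i = j.

Lemma trdet (n : nat) (e : seq L) (A : 'M[rat]_n) (x : L) : n = d.+1 -> size e = n ->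
  basis_of fullv e -> (forall i : 'I_n, x * e`_i = \sum_k A i k *: e`_k) ->
  ratr (\det A) = \prod_j sigma j x /\ ratr (\tr A) = \sum_j sigma j x.
Proof.
move=> hn; subst n => hs eb hA.
pose C : 'M[R[i]]_d.+1 := \matrix_(k, j) sigma j e`_k.
have Cu : C \in unitmx.
  rewrite -unitmx_tr -row_free_unit -kermx_eq0; apply/eqP/matrixP => a b.
  have := mulmx_ker C^T; move/(congr1 (row a)); rewrite row_mul row0 => hv.
  rewrite [RHS]mxE.
  have := @artin_basis R L d.+1 sigma hdist e (fun j => row a (kermx C^T) 0 j) eb.
  move=> H; transitivity (row a (kermx C^T) 0 b); first by rewrite !mxE.
  apply: H => k hk.
  transitivity ((row a (kermx C^T) *m C^T) 0 (inord k)); last by rewrite hv mxE.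
  rewrite !mxE; apply: eq_bigr => j _; rewrite !mxE inordK //; by rewrite -hs.
have hrel : map_mx ratr A *m C = C *m diag_mx (\row_j sigma j x).
  apply/matrixP => i j; rewrite mul_mx_diag !mxE.
  rewrite -rmorphM mulrC hA rmorph_sum; apply: eq_bigr => k _.
  by rewrite !mxE fZ.
have hA' : map_mx ratr A = C *m diag_mx (\row_j sigma j x) *m invmx C.
  by rewrite -hrel mulmxK.
split.
  rewrite -det_map_mx hA' !det_mulmx det_inv det_diag mulrC mulrA mulVr ?mul1r.
    by apply: eq_bigr => j _; rewrite mxE.
  by rewrite -unitmxE.
have -> : ratr (\tr A) = \tr (map_mx ratr A : 'M[R[i]]_d.+1).
  by rewrite /mxtrace rmorph_sum; apply: eq_bigr => i _; rewrite mxE.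
rewrite hA' mxtrace_mulC mulKmx // mxtrace_diag.
by apply: eq_bigr => j _; rewrite mxE.
Qed.

End TrDet.
Section Comb.
Variables (r m : nat).

Lemma pair_nat (T : Type) (idx : T) (op : Monoid.com_law idx) (F : nat -> T) :
  \big[op/idx]_(0 <= l < 2 * m) F l = \big[op/idx]_(0 <= k < m) op (F (2 * k)%N) (F (2 * k + 1)%N).
Proof.
elim: m => [|n IH]; first by rewrite !big_geq.
rewrite [RHS]big_nat_recr //= -IH.
have -> : (2 * n.+1 = (2 * n).+1.+1)%N by lia.
rewrite big_nat_recr //= big_nat_recr //= Monoid.mulmA.
by rewrite addn1.
Qed.

Lemma split_pairs (T : Type) (idx : T) (op : Monoid.com_law idx) (F : nat -> T) :
  \big[op/idx]_(l < r + 2 * m) F l =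
  op (\big[op/idx]_(l < r) F l) (\big[op/idx]_(k < m) op (F (r + 2 * k)%N) (F (r + 2 * k + 1)%N)).
Proof.
rewrite -(big_mkord (fun _ => true) F) -(big_mkord (fun _ => true) F).
rewrite -(big_mkord (fun _ => true) (fun k => op (F (r + 2 * k)%N) (F (r + 2 * k + 1)%N))).
rewrite (@big_cat_nat _ _ op r 0 (r + 2 * m) (fun _ => true) F) ?leq_addr //=; congr (op _ _).
rewrite -{1}(add0n r) (big_addn _ _ _ (fun _ => true) F) addnC addnK pair_nat.
by apply: eq_bigr => k _; rewrite !(addnC _ r) addnA.
Qed.

Lemma split3 (T : Type) (idx : T) (op : Monoid.com_law idx) (F : nat -> T) :
  \big[op/idx]_(1 <= j < (r + 2 * m).+1) F j =
  op (\big[op/idx]_(l < r) F l.+1) (\big[op/idx]_(k < m) op (F (r + k).+1) (F (r + m + k).+1)).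
Proof.
rewrite (@big_cat_nat _ _ op r.+1 1 (r + 2 * m).+1 (fun _ => true) F); [|lia|lia].
rewrite (@big_cat_nat _ _ op (r + m).+1 r.+1 (r + 2 * m).+1 (fun _ => true) F); [|lia|lia].
congr (op _ _).
  rewrite -{1}(add0n 1%N) (big_addn _ _ _ (fun _ => true) F) subn1 /=.
  rewrite -(big_mkord (fun _ => true) (fun l => F l.+1)).
  by apply: eq_bigr => l _; rewrite addn1.
rewrite -(big_mkord (fun _ => true) (fun k => op (F (r + k).+1) (F (r + m + k).+1))).
rewrite big_split /=; congr (op _ _).
  rewrite -{1}(add0n r.+1) (big_addn _ _ _ (fun _ => true) F).
  have -> : ((r + m).+1 - r.+1 = m)%N by lia.
  by apply: eq_bigr => k _; rewrite addnS addnC.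
rewrite -{1}(add0n (r + m).+1) (big_addn _ _ _ (fun _ => true) F).
have -> : ((r + 2 * m).+1 - (r + m).+1 = m)%N by lia.
by apply: eq_bigr => k _; rewrite addnS addnC.
Qed.

End Comb.
Section Pairing.
Variables (R : realType) (r m : nat).

Definition cvn (c : nat -> R[i]) (l : nat) : R :=
  if (l < r)%N then complex.Re (c l.+1)
  else if ((l - r) %% 2 == 1)%N then complex.Im (c (r + (l - r) %/ 2).+1)
  else complex.Re (c (r + (l - r) %/ 2).+1).

Definition wvn (w : nat -> R[i]) (l : nat) : R :=
  if (l < r)%N then complex.Re (w l.+1)
  else if ((l - r) %% 2 == 1)%N then - 2 * complex.Im (w (r + (l - r) %/ 2).+1)
  else 2 * complex.Re (w (r + (l - r) %/ 2).+1).

Lemma cvn_lt c l : (l < r)%N -> cvn c l = complex.Re (c l.+1).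
Proof. by rewrite /cvn => ->. Qed.
Lemma wvn_lt c l : (l < r)%N -> wvn c l = complex.Re (c l.+1).
Proof. by rewrite /wvn => ->. Qed.

Lemma idx_ev k : [/\ (r + 2 * k < r)%N = false, ((r + 2 * k - r) %% 2 == 1)%N = false
   & ((r + 2 * k - r) %/ 2 = k)%N].
Proof. split; [lia| apply/negbTE/eqP; lia | lia]. Qed.

Lemma idx_od k : [/\ (r + 2 * k + 1 < r)%N = false, ((r + 2 * k + 1 - r) %% 2 == 1)%N
   & ((r + 2 * k + 1 - r) %/ 2 = k)%N].
Proof. split; [lia| apply/eqP; lia | lia]. Qed.

Lemma cvn_ev c k : cvn c (r + 2 * k) = complex.Re (c (r + k).+1).
Proof. by case: (idx_ev k) => h1 h2 h3; rewrite /cvn h1 h2 h3. Qed.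
Lemma cvn_od c k : cvn c (r + 2 * k + 1) = complex.Im (c (r + k).+1).
Proof. by case: (idx_od k) => h1 h2 h3; rewrite /cvn h1 h2 h3. Qed.
Lemma wvn_ev c k : wvn c (r + 2 * k) = 2 * complex.Re (c (r + k).+1).
Proof. by case: (idx_ev k) => h1 h2 h3; rewrite /wvn h1 h2 h3. Qed.
Lemma wvn_od c k : wvn c (r + 2 * k + 1) = - 2 * complex.Im (c (r + k).+1).
Proof. by case: (idx_od k) => h1 h2 h3; rewrite /wvn h1 h2 h3. Qed.

Lemma real_re (z : R[i]) : complex.Im z = 0 -> z = (complex.Re z)%:C%C.
Proof. by case: z => a b /= ->. Qed.

Lemma rc_sum (I : Type) (s : seq I) (f : I -> R) :
  ((\sum_(i <- s) f i)%:C)%C = \sum_(i <- s) ((f i)%:C)%C.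
Proof. exact: rmorph_sum. Qed.
Lemma rc_add (a b : R) : ((a + b)%:C)%C = (a%:C + b%:C)%C.
Proof. exact: rmorphD. Qed.

Lemma real_mul (a b : R[i]) : complex.Im a = 0 -> complex.Im b = 0 ->
  (complex.Re a * complex.Re b)%:C%C = a * b.
Proof. by case: a => x y; case: b => u v /= -> ->; apply/eqP; rewrite eq_complex /= !mulr0 mul0r subr0 addr0 !eqxx. Qed.

Lemma pair_term (c w : R[i]) :
  (complex.Re c * (2 * complex.Re w) + complex.Im c * (- 2 * complex.Im w))%:C%C
   = c * w + c^*%C * w^*%C.
Proof. by case: c => a b; case: w => x y; apply/eqP; rewrite eq_complex /=; apply/andP; split; apply/eqP; ring. Qed.

Lemma pairing (c w : nat -> R[i]) :
  (forall j, (0 < j <= r)%N -> complex.Im (c j) = 0) ->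
  (forall j, (0 < j <= r)%N -> complex.Im (w j) = 0) ->
  (forall k, (0 < k <= m)%N -> c (r + m + k)%N = (c (r + k)%N)^*%C) ->
  (forall k, (0 < k <= m)%N -> w (r + m + k)%N = (w (r + k)%N)^*%C) ->
  ((\sum_(l < r + 2 * m) cvn c l * wvn w l : R)%:C)%C = \sum_(1 <= j < (r + 2 * m).+1) c j * w j.
Proof.
move=> hc hw hcc hwc.
rewrite (split_pairs r m _ _ (@GRing.add R : Monoid.com_law 0) (fun l => cvn c l * wvn w l)).
rewrite (split3 r m _ _ (@GRing.add R[i] : Monoid.com_law 0) (fun j => c j * w j)) /=.
rewrite rc_add !rc_sum; congr (_ + _).
  apply: eq_bigr => l _; have hl : (l < r)%N := ltn_ord l.
  rewrite cvn_lt // wvn_lt // real_mul // ?hc ?hw //; lia.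
apply: eq_bigr => k _.
rewrite cvn_ev cvn_od wvn_ev wvn_od pair_term.
have hk := ltn_ord k; rewrite -!addnS hcc ?hwc //; lia.
Qed.

End Pairing.
Section Surface.
Variables (R : realType) (r m : nat).

Definition Fsurf {n : nat} (x : 'rV[R]_n) : R :=
  `| \prod_(j < r) rcoord x j | *
    \prod_(i < m) (rcoord x (r + 2 * i) ^+ 2 + rcoord x (r + 2 * i + 1) ^+ 2).

Lemma rcoord_row (n : nat) (g : nat -> R) k : (k < n)%N ->
  rcoord (\row_(l < n) g l) k = g k.
Proof. by move=> hk; rewrite /rcoord insubT /= mxE. Qed.

Lemma rcoord_scale (n : nat) (a : R) (x : 'rV[R]_n) k : rcoord (a *: x) k = a * rcoord x k.
Proof. by rewrite /rcoord; case: insubP => [i _ _|_]; rewrite ?mxE ?mulr0. Qed.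

Lemma cabsE (z : R[i]) : ((cabs z)%:C)%C = `|z|.
Proof. by rewrite normc_def. Qed.

Lemma cabs_ge0 (z : R[i]) : 0 <= cabs z.
Proof. exact: sqrtr_ge0. Qed.

Lemma cabsM (a b : R[i]) : cabs (a * b) = cabs a * cabs b.
Proof.
have rc_mul (x y : R) : ((x * y)%:C)%C = (x%:C * y%:C)%C by exact: rmorphM.
by apply: complexI; rewrite rc_mul !cabsE normrM.
Qed.

Lemma cabs_real (z : R[i]) : complex.Im z = 0 -> cabs z = `|complex.Re z|.
Proof. by rewrite /cabs => ->; rewrite expr0n addr0 sqrtr_sqr. Qed.

Lemma cabs_sq (z : R[i]) : cabs z ^+ 2 = complex.Re z ^+ 2 + complex.Im z ^+ 2.
Proof. by rewrite /cabs sqr_sqrtr // addr_ge0 // sqr_ge0. Qed.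

Lemma cabs_conj (z : R[i]) : cabs (z^*)%C = cabs z.
Proof. by case: z => a b; rewrite /cabs /= sqrrN. Qed.

Lemma cabs_eq0 (z : R[i]) : (cabs z == 0) = (z == 0).
Proof. by rewrite -(inj_eq (@complexI R)) cabsE /= normr_eq0. Qed.

Lemma surf_prod (c : nat -> R[i]) :
  (forall j, (0 < j <= r)%N -> complex.Im (c j) = 0) ->
  (forall k, (0 < k <= m)%N -> c (r + m + k)%N = (c (r + k)%N)^*%C) ->
  Fsurf (\row_(l < r + 2 * m) @cvn R r c l) * cabs (c 0%N)
   = \prod_(0 <= j < (r + 2 * m).+1) cabs (c j).
Proof.
move=> hc hcc.
rewrite big_ltn // (split3 r m _ _ (@GRing.mul R : Monoid.com_law 1) (fun j => cabs (c j))) /=.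
rewrite mulrC /Fsurf; congr (_ * (_ * _)).
  rewrite normr_prod; apply: eq_bigr => l _; have hl := ltn_ord l.
  rewrite rcoord_row ?cvn_lt // ?cabs_real ?hc //; lia.
apply: eq_bigr => k _; have hk := ltn_ord k.
rewrite !rcoord_row; [|lia|lia].
rewrite cvn_ev cvn_od -cabs_sq -!addnS hcc ?cabs_conj ?expr2 //; lia.
Qed.

Lemma Fsurf_scale (n : nat) (a : R) (x : 'rV[R]_n) :
  Fsurf (a *: x) = `|a| ^+ (r + 2 * m) * Fsurf x.
Proof.
rewrite /Fsurf.
under eq_bigr => j _ do rewrite rcoord_scale.
under [X in _ * X]eq_bigr => j _ do rewrite !rcoord_scale.
rewrite big_split /= prodr_const card_ord normrM normrX.
have -> : \prod_(i < m) ((a * rcoord x (r + 2 * i)) ^+ 2 + (a * rcoord x (r + 2 * i + 1)) ^+ 2)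
   = \prod_(i < m) (a ^+ 2 * (rcoord x (r + 2 * i) ^+ 2 + rcoord x (r + 2 * i + 1) ^+ 2)).
  by apply: eq_bigr => i _; rewrite !exprMn mulrDr.
rewrite big_split /= prodr_const card_ord exprD exprM real_normK ?num_real //.
by rewrite -!mulrA; congr (_ * _); rewrite mulrCA.
Qed.

End Surface.
Section Main.
Variables (R : realType) (L : fieldExtType rat) (d r m : nat).
Variables (alpha : 'I_d -> L) (sigma : 'I_d.+1 -> {rmorphism L -> R[i]}).
Hypothesis hd : d = (r + 2 * m)%N.
Hypothesis hb : basis_of fullv (1 :: [seq alpha i | i <- enum 'I_d]).
Hypothesis hdist : forall i j, (forall x, sigma i x = sigma j x) -> i = j.
Hypothesis hreal : forall (i : 'I_d.+1) x, (i <= r)%N -> complex.Im (sigma i x) = 0.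
Hypothesis hconj : forall (k : nat) x, (1 <= k <= m)%N ->
     sigma (inord (r + k)) x = conjc (sigma (inord (r + m + k)) x).

Let cb := 1 :: [seq alpha i | i <- enum 'I_d].

Lemma size_cb : size cb = d.+1.
Proof. by rewrite /= size_map size_enum_ord. Qed.

Lemma dimL : \dim (fullv : {vspace L}) = d.+1.
Proof. by rewrite -size_cb; have := size_basis (X := in_tuple cb) hb. Qed.

Lemma mxof_hyp (x : L) (i : 'I_(\dim (fullv : {vspace L}))) :
  let e := vbasis (fullv : {vspace L}) in
  x * e`_i = \sum_k (passmx.mxof e e (amull x)) i k *: e`_k.
Proof.
move=> e; have eb : basis_of fullv e := vbasisP fullv.
have := @passmx.rVof_app _ _ _ e e eb (amull x) e`_i.
rewrite (passmx.rVofE eb) -rowE lfunE /= => h.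
rewrite -[LHS](passmx.rVofK eb) h /passmx.vecof.
by apply: eq_bigr => k _; rewrite mxE.
Qed.

Lemma trace_formula (x : L) : (ratr (ftrace x) : R[i]) = \sum_j sigma j x.
Proof.
have := @trdet R L d sigma hdist _ (vbasis fullv) (passmx.mxof (vbasis fullv) (vbasis fullv) (amull x)) x dimL.
rewrite size_tuple => /(_ erefl (vbasisP fullv) (mxof_hyp x)) [_ ->] //.
Qed.

Lemma norm_formula (x : L) : (ratr (fnorm x) : R[i]) = \prod_j sigma j x.
Proof.
have := @trdet R L d sigma hdist _ (vbasis fullv) (passmx.mxof (vbasis fullv) (vbasis fullv) (amull x)) x dimL.
rewrite size_tuple => /(_ erefl (vbasisP fullv) (mxof_hyp x)) [-> _] //.
Qed.

Lemma cb_lift (l : 'I_d) : cb`_(lift ord0 l) = alpha l.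
Proof.
by rewrite lift0 /= (nth_map l) ?size_enum_ord // nth_ord_enum.
Qed.

Lemma cb0 : cb`_(@ord0 d) = 1.
Proof. by []. Qed.

Lemma lat_repr (y : L) : in_lattice alpha y ->
  exists g : 'I_d.+1 -> int, y = \sum_k (g k)%:~R *: cb`_k.
Proof.
case=> c0 [c ->].
exists (fun k => if unlift ord0 k is Some l then c l else c0).
rewrite big_ord_recl unlift_none cb0 scaler_int -mulrzl mulr1; congr (_ + _).
by apply: eq_bigr => l _; rewrite liftK cb_lift scaler_int mulrzl.
Qed.

Lemma cb_lat (k : 'I_d.+1) : in_lattice alpha cb`_k.
Proof.
case: (unliftP ord0 k) => [l ->|->].
  rewrite cb_lift; exists 0, (fun j => (j == l)%:R).
  rewrite (bigD1 l) //= big1 ?eqxx ?add0r ?addr0 ?mul1r //.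
  by move=> j /negPf ->; rewrite mul0r.
by exists 1, (fun _ => 0); rewrite big1 ?addr0 // => j _; rewrite mul0r.
Qed.

Lemma lat_mat (u : L) : (forall y, in_lattice alpha y -> in_lattice alpha (u * y)) ->
  exists B : 'M[int]_d.+1, forall i : 'I_d.+1, u * cb`_i = \sum_k (B i k)%:~R *: cb`_k.
Proof.
move=> hu.
have : forall i : 'I_d.+1, exists g : 'I_d.+1 -> int, u * cb`_i = \sum_k (g k)%:~R *: cb`_k.
  by move=> i; apply: lat_repr; apply: hu; apply: cb_lat.
case/choice => G hG; exists (\matrix_(i, k) G i k) => i.
by rewrite hG; apply: eq_bigr => k _; rewrite mxE.
Qed.

Lemma int_det_prod (u : L) : (forall y, in_lattice alpha y -> in_lattice alpha (u * y)) ->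
  exists z : int, \prod_j sigma j u = z%:~R.
Proof.
case/lat_mat => B hB; exists (\det B).
have := @trdet R L d sigma hdist _ cb (map_mx intr B) u erefl size_cb hb.
case=> [i|<- _]; last by rewrite det_map_mx rmorph_int.
by rewrite hB; apply: eq_bigr => k _; rewrite mxE.
Qed.

Lemma unit_norm (u : L) : unit_ZL alpha u -> `|\prod_j sigma j u| = 1.
Proof.
case=> [[_ hu] [v [[_ hv] uv]]].
have [a ha] := int_det_prod u hu; have [b hb'] := int_det_prod v hv.
have : (a * b)%:~R = 1 :> R[i].
  rewrite intrM -ha -hb' -big_split /=.
  by rewrite big1 // => j _; rewrite -rmorphM uv rmorph1.
move/eqP; rewrite -[X in _ == X](mulr1z (1 : R[i])) eqr_int => /eqP hab.
have : `|a| = 1.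
  by move: hab; rewrite mulrC => /intUnitRing.unitzPl; rewrite qualifE /= => /orP [] /eqP ->.
by rewrite ha -intr_norm => ->.
Qed.
Definition zc (y : L) (j : nat) : R[i] := sigma (inord j) y.
Definition wf (i : 'I_d) (j : nat) : R[i] := sigma ord0 (alpha i) - sigma (inord j) (alpha i).
Definition Mm : 'M[R]_d := \matrix_(l, i) wvn R r (wf i) l.
Definition yv (y : L) : 'rV[R]_d := \row_(l < d) cvn R r (zc y) l.

Lemma inord_le j : (j <= d)%N -> ((inord j : 'I_d.+1) : nat) = j.
Proof. by move=> h; rewrite inordK. Qed.

Lemma inord0' : (inord 0 : 'I_d.+1) = ord0.
Proof. by apply: val_inj; rewrite /= inordK. Qed.

Lemma im_real0 (z : R[i]) : complex.Im z = 0 -> (z^*)%C = z.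
Proof. by case: z => a b /= ->; rewrite oppr0. Qed.

Lemma imB (x y : R[i]) : complex.Im (x - y) = complex.Im x - complex.Im y.
Proof. by case: x; case: y. Qed.

Lemma zc_real y j : (0 < j <= r)%N -> complex.Im (zc y j) = 0.
Proof. move=> hj; apply: hreal; rewrite inord_le; lia. Qed.

Lemma zc_conj y k : (0 < k <= m)%N -> zc y (r + m + k)%N = (zc y (r + k)%N)^*%C.
Proof. by move=> hk; rewrite /zc hconj // conjcK. Qed.

Lemma wf_real i j : (0 < j <= r)%N -> complex.Im (wf i j) = 0.
Proof. move=> hj; rewrite /wf imB !hreal ?subrr //; rewrite inord_le; lia. Qed.

Lemma wf_conj i k : (0 < k <= m)%N -> wf i (r + m + k)%N = (wf i (r + k)%N)^*%C.
Proof.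
move=> hk; rewrite /wf rmorphB /= im_real0 ?hreal //.
by rewrite hconj // conjcK.
Qed.

Lemma rc_ratr (x : rat) : (((ratr x : R))%:C)%C = ratr x.
Proof. exact: (fmorph_rat (real_complex R) x). Qed.

Lemma sum_ord_nat (F : nat -> R[i]) :
  \sum_(j < d.+1) F j = F 0%N + \sum_(1 <= j < (r + 2 * m).+1) F j.
Proof. by rewrite -(big_mkord xpredT) big_ltn // hd. Qed.

Lemma yvM (y : L) :
  yv y *m Mm = \row_i (ratr (ftrace y) * complex.Re (sigma ord0 (alpha i))
                        - ratr (ftrace (y * alpha i))).
Proof.
apply/rowP => i; rewrite !mxE; apply: complexI.
have -> : \sum_j yv y 0 j * Mm j i = \sum_(l < r + 2 * m) cvn R r (zc y) l * wvn R r (wf i) l.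
  rewrite -(big_mkord xpredT (fun l => cvn R r (zc y) l * wvn R r (wf i) l)) -hd big_mkord.
  by apply: eq_bigr => l _; rewrite !mxE.
rewrite pairing; first last.
- exact: wf_conj.
- exact: zc_conj.
- exact: wf_real.
- exact: zc_real.
have rcB (a b : R) : ((a - b)%:C)%C = (a%:C - b%:C)%C by exact: rmorphB.
have rcM (a b : R) : ((a * b)%:C)%C = (a%:C * b%:C)%C by exact: rmorphM.
rewrite rcB rcM !rc_ratr !trace_formula -real_re ?hreal //.
rewrite mulr_suml -sumrB.
symmetry; transitivity (\sum_(j < d.+1) zc y j * wf i j).
  apply: eq_bigr => j _; rewrite /zc /wf inord_val rmorphM; ring.
by rewrite (sum_ord_nat (fun j => zc y j * wf i j)) /wf inord0' subrr mulr0 add0r.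
Qed.

Definition xc (x : 'rV[R]_d) (j : nat) : R[i] :=
  if j == 0%N then 0
  else if (j <= r)%N then ((rcoord x j.-1)%:C)%C
  else if (j <= r + m)%N then
    Complex (rcoord x (r + 2 * (j - r - 1))) (rcoord x (r + 2 * (j - r - 1) + 1))
  else (Complex (rcoord x (r + 2 * (j - r - m - 1))) (rcoord x (r + 2 * (j - r - m - 1) + 1)))^*%C.

Lemma rcoord_ord (n : nat) (x : 'rV[R]_n) (i : 'I_n) : rcoord x i = x 0 i.
Proof. by rewrite /rcoord valK. Qed.

Lemma xc_mid x k : (k < m)%N ->
  xc x (r + k).+1 = Complex (rcoord x (r + 2 * k)) (rcoord x (r + 2 * k + 1)).
Proof.
move=> hk; rewrite /xc /= ifF; last by lia.
rewrite ifT; last by lia.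
by have -> : ((r + k).+1 - r - 1 = k)%N by lia.
Qed.

Lemma cvn_xc x l : (l < d)%N -> cvn R r (xc x) l = rcoord x l.
Proof.
move=> hl; rewrite /cvn; case: ifP => hlr.
  by rewrite /xc /= ifT.
have hlr' : (r <= l)%N by rewrite leqNgt hlr.
have hk : ((l - r) %/ 2 < m)%N by lia.
rewrite xc_mid //=.
case: ifP => /eqP ho /=; congr rcoord; lia.
Qed.

Lemma xc_zero x : (forall j, (0 < j <= d)%N -> xc x j = 0) -> x = 0.
Proof.
move=> hz; apply/rowP => l; rewrite [RHS]mxE -rcoord_ord -cvn_xc //.
have hl := ltn_ord l.
rewrite /cvn; case: ifP => hlr; first by rewrite hz //; lia.
by case: ifP => _; rewrite hz //; lia.
Qed.

Lemma xc_real x j : (0 < j <= r)%N -> complex.Im (xc x j) = 0.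
Proof. by move=> hj; rewrite /xc ifF ?ifT //; lia. Qed.

Lemma xc_conj x k : (0 < k <= m)%N -> xc x (r + m + k)%N = (xc x (r + k)%N)^*%C.
Proof.
move=> hk.
have e : (r + k)%N = (r + (k - 1)).+1 by lia.
rewrite e xc_mid; last by lia.
have h1 : (r + m + k == 0)%N = false by apply/eqP; lia.
have h2 : (r + m + k <= r)%N = false by lia.
have h3 : (r + m + k <= r + m)%N = false by lia.
rewrite /xc h1 h2 h3.
by have -> : (r + m + k - r - m - 1 = k - 1)%N by lia.
Qed.

Lemma Mm_unit : Mm \in unitmx.
Proof.
rewrite -row_free_unit -kermx_eq0; apply/eqP.
suff H : forall x : 'rV[R]_d, x *m Mm = 0 -> x = 0.
  apply/row_matrixP => a; rewrite row0; apply: H.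
  by rewrite -row_mul mulmx_ker row0.
move=> x hx.
have hc : forall i : 'I_d, \sum_(1 <= j < (r + 2 * m).+1) xc x j * wf i j = 0.
  move=> i; rewrite -pairing; first last.
  - exact: wf_conj.
  - exact: xc_conj.
  - exact: wf_real.
  - exact: xc_real.
  have e : \sum_(l < r + 2 * m) cvn R r (xc x) l * wvn R r (wf i) l = (x *m Mm) 0 i.
    rewrite !mxE -(big_mkord xpredT (fun l => cvn R r (xc x) l * wvn R r (wf i) l)) -hd big_mkord.
    by apply: eq_bigr => l _; rewrite !mxE cvn_xc // -rcoord_ord.
  by rewrite e hx mxE.
pose S := \sum_(1 <= j < (r + 2 * m).+1) xc x j.
pose z := fun j : 'I_d.+1 => if (j : nat) == 0%N then - S else xc x j.
have hz : forall j, z j = 0.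
  apply: (@artin_basis R L d.+1 sigma hdist cb z hb) => k hk.
  rewrite size_cb in hk.
  have -> : \sum_j z j * sigma j cb`_k = - S * sigma (inord 0) cb`_k
       + \sum_(1 <= j < (r + 2 * m).+1) xc x j * sigma (inord j) cb`_k.
    transitivity (\sum_(j < d.+1) (fun j : nat => z (inord j) * sigma (inord j) cb`_k) j).
      by apply: eq_bigr => j _; rewrite inord_val.
    rewrite -(big_mkord xpredT (fun j : nat => z (inord j) * sigma (inord j) cb`_k)).
    rewrite big_ltn // -hd /=; congr (_ + _).
      by rewrite /z inordK.
    apply: eq_big_nat => j /andP [hj1 hj2].
    by rewrite /z inordK // ifF //; lia.
  rewrite inord0'.
  case: (posnP k) => [->|hk0].
    have -> : cb`_0 = 1 by [].
    rewrite rmorph1 mulr1.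
    under eq_bigr => j _ do rewrite rmorph1 mulr1.
    by rewrite /S -hd addrC subrr.
  have hlt : (k.-1 < d)%N by lia.
  pose l : 'I_d := Ordinal hlt.
  have hkl : cb`_k = alpha l.
    rewrite /cb -(prednK hk0) /= (nth_map l); last by rewrite size_enum_ord; lia.
    have -> : k.-1 = l by [].
    by rewrite nth_ord_enum.
  have := hc l; rewrite /wf.
  under eq_bigr => j _ do rewrite mulrBr.
  rewrite sumrB -hd => h.
  rewrite hkl /S -hd mulNr mulr_suml.
  have e : forall A B : R[i], - A + B = - (A - B) by move=> A B; ring.
  by rewrite e h oppr0.
apply: xc_zero => j hj.
have := hz (inord j); rewrite /z inordK; last by lia.
by rewrite ifF //; lia.
Qed.

Definition Ps (s : L) : R := \prod_(j < d.+1) cabs (sigma j s).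
Definition qv (y : L) : R := ratr (ftrace y).
Definition Gf (s u : L) : R := `|qv (s * u)| * Ps s / cabs (sigma ord0 (s * u)).
Definition gam (s u : L) : R := powR (Gf s u) (d%:R^-1).
Definition beta0 : 'rV[R]_d := \row_(l < d) cvn R r (fun _ => 1) l.
Definition bet (s u : L) : 'rV[R]_d :=
  if gam s u == 0 then beta0
  else (gam s u)^-1 *: (powR `|qv (s * u)| (d%:R^-1) *: yv (s * u)).

Lemma rcoord_row_gen (n : nat) (g : nat -> R) k :
  rcoord (\row_(l < n) g l) k = if (k < n)%N then g k else 0.
Proof.
case: ifP => hk; first exact: rcoord_row.
by rewrite /rcoord insubF.
Qed.

Lemma Fsurf_d (g : nat -> R) :
  Fsurf R r m (\row_(l < d) g l) = Fsurf R r m (\row_(l < r + 2 * m) g l).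
Proof. by rewrite /Fsurf; under eq_bigr do rewrite !rcoord_row_gen; under [in RHS]eq_bigr do rewrite !rcoord_row_gen; rewrite hd. Qed.

Lemma cabs1 : cabs (1 : R[i]) = 1.
Proof. by rewrite cabs_real // normr1. Qed.

Lemma beta0_surf : Fsurf R r m beta0 = 1.
Proof.
rewrite /beta0 Fsurf_d.
have := @surf_prod R r m (fun _ => 1) (fun _ _ => erefl) _.
rewrite cabs1 mulr1 => ->; first by rewrite big1 // => j _; rewrite cabs1.
by move=> k _; apply/esym/im_real0.
Qed.

Lemma cabs_prod (F : 'I_d.+1 -> R[i]) : cabs (\prod_j F j) = \prod_j cabs (F j).
Proof.
exact: (big_morph _ (@cabsM R) cabs1).
Qed.

Lemma yv_prod (y : L) :
  Fsurf R r m (yv y) * cabs (sigma ord0 y) = \prod_(j < d.+1) cabs (sigma j y).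
Proof.
rewrite /yv Fsurf_d.
have -> : sigma ord0 y = zc y 0 by rewrite /zc inord0'.
rewrite surf_prod; first last.
- exact: zc_conj.
- exact: zc_real.
rewrite -hd big_mkord; apply: eq_bigr => j _; by rewrite /zc inord_val.
Qed.

Lemma Ps_norm (s : L) : Ps s = `|ratr (fnorm s) : R|.
Proof.
rewrite /Ps -cabs_prod -norm_formula -rc_ratr cabs_real //.
Qed.

Lemma unit_prod (u : L) : unit_ZL alpha u -> \prod_(j < d.+1) cabs (sigma j u) = 1.
Proof.
move=> hu; rewrite -cabs_prod; apply: complexI; rewrite cabsE unit_norm //.
Qed.

Lemma qv0 (y : L) : y = 0 -> qv y = 0.
Proof.
move=> ->; apply: complexI; rewrite /qv rc_ratr trace_formula.
by rewrite big1 // => j _; rewrite rmorph0.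
Qed.

Lemma pow_inv (a : R) : 0 <= a -> (0 < d)%N -> (powR a (d%:R^-1)) ^+ d = a.
Proof.
move=> ha hd0; rewrite -powR_mulrn ?powR_ge0 // -powRrM mulVf ?powRr1 //.
by rewrite pnatr_eq0 -lt0n.
Qed.

Lemma Gf_ge0 s u : 0 <= Gf s u.
Proof.
by rewrite /Gf divr_ge0 ?mulr_ge0 ?normr_ge0 ?cabs_ge0 // /Ps prodr_ge0 // => j _; exact: cabs_ge0.
Qed.

Lemma ident (s u : L) : unit_ZL alpha u ->
  powR `|qv (s * u)| (d%:R^-1) *: (qv (s * u) *: (\row_i complex.Re (sigma ord0 (alpha i)))
     - \row_i ratr (ftrace (s * u * alpha i))) = gam s u *: (bet s u *m Mm)
  /\ Fsurf R r m (bet s u) = 1.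
Proof.
move=> hu.
have hrow : qv (s * u) *: (\row_i complex.Re (sigma ord0 (alpha i)))
     - \row_i ratr (ftrace (s * u * alpha i)) = yv (s * u) *m Mm.
  by rewrite yvM; apply/rowP => i; rewrite !mxE.
rewrite hrow /bet.
case: (eqVneq (gam s u) 0) => hg.
  split; last exact: beta0_surf.
  rewrite hg scale0r.
  have hd0 : (0 < d)%N.
    rewrite lt0n; apply/negP => /eqP d0; move: hg; rewrite /gam d0 invr0 powRr0.
    by move/eqP; rewrite oner_eq0.
  have hG : Gf s u = 0 by apply: powR_eq0_eq0 hg.
  suff -> : qv (s * u) = 0 by rewrite normr0 powR0 ?scale0r // invr_eq0 pnatr_eq0 -lt0n.
  move: hG; rewrite /Gf => /eqP; rewrite !mulf_eq0 invr_eq0 normr_eq0 => /orP [/orP [/eqP //|]|].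
    rewrite /Ps prodf_seq_eq0 => /hasP [j _ /=]; rewrite cabs_eq0 fmorph_eq0 => /eqP s0.
    by apply: qv0; rewrite s0 mul0r.
  by rewrite cabs_eq0 fmorph_eq0 => /eqP; apply: qv0.
split.
  by rewrite -!scalemxAl scalerA mulfV // scale1r.
rewrite !Fsurf_scale.
have [d0|hd0] := posnP d.
  have r0 : r = 0%N by lia.
  have m0 : m = 0%N by lia.
  by rewrite /Fsurf r0 m0 !big_ord0 normr1 !mul1r.
rewrite -hd.
have hgpos : 0 < gam s u by rewrite lt_neqAle eq_sym hg powR_ge0.
have hGne : Gf s u != 0.
  by apply: contra hg => /eqP; rewrite /gam => ->; rewrite powR0 // invr_eq0 pnatr_eq0 -lt0n.
have hz0 : cabs (sigma ord0 (s * u)) != 0.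
  by apply: contra hGne => /eqP; rewrite /Gf => ->; rewrite invr0 mulr0.
have hF : Fsurf R r m (yv (s * u)) = Ps s / cabs (sigma ord0 (s * u)).
  apply: (mulIf hz0); rewrite yv_prod divfK //.
  under eq_bigr do rewrite rmorphM cabsM.
  by rewrite big_split /= (unit_prod u hu) mulr1.
rewrite hF normrV ?unitfE ?gt_eqF // exprVn gtr0_norm // pow_inv ?Gf_ge0 //.
rewrite ger0_norm ?powR_ge0 // pow_inv ?normr_ge0 //.
by rewrite [_ * (Ps s / _)]mulrA -/(Gf s u) mulVf.
Qed.
Lemma cabs_add (a b : R[i]) : cabs (a + b) <= cabs a + cabs b.
Proof.
have rcD (x y : R) : ((x + y)%:C)%C = (x%:C + y%:C)%C by exact: rmorphD.
by rewrite -lecR rcD !cabsE ler_normD.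
Qed.

Lemma cabs0 : cabs (0 : R[i]) = 0.
Proof. by rewrite cabs_real // normr0. Qed.

Lemma cabs_opp (z : R[i]) : cabs (- z) = cabs z.
Proof. by case: z => a b; rewrite /cabs /= !sqrrN. Qed.

Lemma cabs_sum (I : Type) (s : seq I) (P : pred I) (F : I -> R[i]) :
  cabs (\sum_(i <- s | P i) F i) <= \sum_(i <- s | P i) cabs (F i).
Proof.
elim/big_rec2: _ => [|i y1 y2 _ h]; first by rewrite cabs0.
exact: le_trans (cabs_add _ _) (lerD (lexx _) h).
Qed.

Lemma qbound (s u : L) (k : R) : (forall i : 'I_d.+1, i != ord0 -> cabs (sigma i u) <= k) ->
  `| cabs (sigma ord0 (s * u)) - `|qv (s * u)| | <= \sum_(i < d.+1 | i != ord0) cabs (sigma i s) * k.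
Proof.
move=> hk.
set S := \sum_(i < d.+1 | i != ord0) sigma i (s * u).
have hq : ((qv (s * u))%:C)%C = sigma ord0 (s * u) + S.
  by rewrite /qv rc_ratr trace_formula (bigD1 ord0).
have hS : cabs S <= \sum_(i < d.+1 | i != ord0) cabs (sigma i s) * k.
  apply: le_trans (cabs_sum _ _ _ _) _; apply: ler_sum => i hi.
  by rewrite rmorphM cabsM ler_wpM2l ?cabs_ge0 ?hk.
have e1 : `|qv (s * u)| = cabs (sigma ord0 (s * u) + S) by rewrite -hq cabs_real.
have h1 := cabs_add (sigma ord0 (s * u)) S.
have h2 := cabs_add (sigma ord0 (s * u) + S) (- S).
rewrite addrK cabs_opp -e1 in h2.
rewrite -e1 in h1.
rewrite ler_norml; apply/andP; split; lra.
Qed.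

Lemma powR_cont (e P : R) (G : nat -> R) : 0 < P ->
  G n @[n --> \oo] --> P -> powR (G n) e @[n --> \oo] --> powR P e.
Proof.
move=> P0 hG.
have hpos : \forall n \near \oo, 0 < G n := hG _ (lt_nbhsr P0).
have heq : \forall n \near \oo, expR (e * ln (G n)) = powR (G n) e.
  apply: filterS hpos => n hn; by rewrite /powR gt_eqF // mulrC.
apply: cvg_trans (near_eq_cvg heq) _.
have -> : powR P e = expR (e * ln P) by rewrite /powR gt_eqF // mulrC.
have h1 : ln (G n) @[n --> \oo] --> ln P.
  exact: (@continuous_cvg _ _ _ _ _ G (@ln R) P (continuous_ln P0) hG).
have h2 : e * ln (G n) @[n --> \oo] --> e * ln P.
  by apply: cvgM; first exact: cvg_cst.
exact: (@continuous_cvg _ _ _ _ _ (fun n => e * ln (G n)) (@expR R) (e * ln P) (@continuous_expR R (e * ln P)) h2).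
Qed.
Lemma conv (s : L) (un : nat -> L) :
  (forall n, dominant alpha sigma r m (un n)) ->
  rabs sigma (un n) @[n --> \oo] --> +oo ->
  gam s (un n) @[n --> \oo] --> powR `|ratr (fnorm s) : R| (d%:R^-1).
Proof.
move=> hdom hr; rewrite -Ps_norm.
have [d0|hd0] := posnP d.
  have e : (fun n => gam s (un n)) = (fun _ => powR (Ps s) (d%:R^-1)).
    by apply: funext => n; rewrite /gam d0 invr0 !powRr0.
  rewrite e; exact: cvg_cst.
have Ps0 : 0 <= Ps s by rewrite /Ps prodr_ge0 // => j _; exact: cabs_ge0.
case: (eqVneq (Ps s) 0) => hP.
  have e : (fun n => gam s (un n)) = (fun _ => powR (Ps s) (d%:R^-1)).
    by apply: funext => n; rewrite /gam /Gf hP mulr0 mul0r.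
  rewrite e; exact: cvg_cst.
have Ppos : 0 < Ps s by rewrite lt_neqAle eq_sym hP.
rewrite /gam; apply: powR_cont => //.
have c0pos : 0 < cabs (sigma ord0 s).
  rewrite lt_neqAle cabs_ge0 andbT eq_sym; apply: contra hP => /eqP h.
  by rewrite /Ps (bigD1 ord0) //= h mul0r.
set kap := kappa alpha sigma r m.
have kpos : 1 <= kap.
  have [_ [t [t1 [/andP [ht1 ht2] _]]]] := hdom 0%N.
  have t0 : 0 < t by lra.
  rewrite -(ler_pM2r t0) mul1r; exact: le_trans ht1 ht2.
set K := \sum_(i < d.+1 | i != ord0) cabs (sigma i s) * kap.
have K0 : 0 <= K by rewrite /K sumr_ge0 // => i _; rewrite mulr_ge0 ?cabs_ge0 //; lra.
have H1 : `|qv (s * un n)| / cabs (sigma ord0 (s * un n)) @[n --> \oo] --> (1 : R).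
  apply/cvgrPdist_le => eps eps0.
  have := (proj1 (cvgryPge (fun n => rabs sigma (un n))) hr) (K / (cabs (sigma ord0 s) * eps) + 1).
  move=> hA; near=> n.
  have hn : K / (cabs (sigma ord0 s) * eps) + 1 <= rabs sigma (un n) by near: n; exact: hA.
  have [_ [t [t1 [/andP [ht1 ht2] hi]]]] := hdom n.
  have hbd : forall i : 'I_d.+1, i != ord0 -> cabs (sigma i (un n)) <= kap.
    move=> i hi0.
    have hi1 : (0 < i)%N by rewrite lt0n; apply: contra hi0 => /eqP h; apply/eqP/val_inj.
    have /andP [_ h2] := hi i hi1.
    have hp : powR t (- (d%:R^-1)) <= 1.
      rewrite -[X in _ <= X](powRr0 t); apply: ler_powR; first lra.
      by rewrite oppr_le0 invr_ge0.
    apply: le_trans h2 _; rewrite -[X in _ <= X](mulr1 kap) ler_wpM2l //; lra.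
  have hq := qbound s (un n) kap hbd.
  rewrite -/K in hq.
  have hcz : cabs (sigma ord0 (s * un n)) = cabs (sigma ord0 s) * rabs sigma (un n).
    by rewrite rmorphM cabsM.
  set cz := cabs (sigma ord0 (s * un n)) in hq hcz *.
  have hAe : K / (cabs (sigma ord0 s) * eps) * (cabs (sigma ord0 s) * eps) = K.
    by rewrite divfK // mulf_neq0 // gt_eqF.
  have czpos : 0 < cz.
    rewrite hcz mulr_gt0 //; apply: lt_le_trans hn; apply: ltr_pwDr => //.
    by rewrite divr_ge0 // mulr_ge0 // ltW.
  have -> : 1 - `|qv (s * un n)| / cz = (cz - `|qv (s * un n)|) / cz.
    by rewrite mulrBl divff // gt_eqF.
  rewrite normrM normfV (gtr0_norm czpos) ler_pdivrMr //.
  apply: le_trans hq _.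
  have h3 : K <= eps * cz.
    rewrite hcz mulrA [eps * _]mulrC -hAe.
    rewrite [X in X <= _]mulrC; apply: ler_wpM2l; [by rewrite ltW // mulr_gt0 | lra].
  exact: h3.
  Unshelve. all: end_near.
have e : (fun n => Gf s (un n)) =
    (fun n => `|qv (s * un n)| / cabs (sigma ord0 (s * un n)) * Ps s).
  by apply: funext => n; rewrite /Gf mulrAC.
rewrite e -[X in _ --> X]mul1r; apply: cvgM => //; exact: cvg_cst.
Qed.
End Main.

Theorem lemma11 (R : realType) (L : fieldExtType rat) (d r m : nat)
  (alpha : 'I_d -> L) (sigma : 'I_d.+1 -> {rmorphism L -> R[i]}) :
  (* d = r + 2m *)
  d = (r + 2 * m)%N ->
  (* 1, alpha_1, ..., alpha_d is a Q-basis of K *)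
  basis_of fullv (1 :: [seq alpha i | i <- enum 'I_d]) ->
  (* sigma_0, ..., sigma_d are pairwise distinct embeddings K -> C *)
  (forall i j, (forall x, sigma i x = sigma j x) -> i = j) ->
  (* sigma_0 (= id), ..., sigma_r are real *)
  (forall (i : 'I_d.+1) x, (i <= r)%N -> complex.Im (sigma i x) = 0) ->
  (* sigma_(r+1), ..., sigma_d are non-real *)
  (forall i : 'I_d.+1, (r < i)%N -> exists x, complex.Im (sigma i x) != 0) ->
  (* sigma_(r+k) = conj sigma_(r+m+k), 1 <= k <= m *)
  (forall (k : nat) x, (1 <= k <= m)%N ->
     sigma (inord (r + k)) x = conjc (sigma (inord (r + m + k)) x)) ->
  let avec : 'rV[R]_d := \row_i complex.Re (sigma ord0 (alpha i)) in
  exists M : 'M[R]_d, M \in unitmx /\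
  forall s : L, in_dual alpha s ->
  exists (gamma : L -> R) (beta : L -> 'rV[R]_d),
    (forall u, unit_ZL alpha u ->
       let q : R := ratr (ftrace (s * u)) in
       let p : 'rV[R]_d := \row_i ratr (ftrace (s * u * alpha i)) in
       powR `|q| (d%:R^-1) *: (q *: avec - p) = gamma u *: (beta u *m M)
       /\ on_surface r m (beta u)) /\
    (forall un : nat -> L,
       (forall n, dominant alpha sigma r m (un n)) ->
       rabs sigma (un n) @[n --> \oo] --> +oo ->
       gamma (un n) @[n --> \oo] --> powR `|ratr (fnorm s) : R| (d%:R^-1)).
Proof.
move=> hd hb hdist hreal _ hconj avec.
exists (Mm R L d r alpha sigma); split.
  exact: (@Mm_unit R L d r m alpha sigma hd hb hdist hreal hconj).
move=> s _.
exists (gam R L d sigma s), (bet R L d r sigma s); split.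
  move=> u hu q p.
  have [h1 h2] := @ident R L d r m alpha sigma hd hb hdist hreal hconj s u hu.
  by split; [exact: h1 | exact: h2].
move=> un hdom hr.
exact: (@conv R L d r m alpha sigma hb hdist s un hdom hr).
Qed.
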